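(* Let $q=p^\ell$ be a prime power with $p$ prime and $d$ a positive integer; write $d+1=s(q-q/p)+r$ with integers $s\ge0$, $0\le r<q-q/p$. Let $k\ge s+1$, define $e^\star\in\{0,\dots,q-1\}^k$ by $e^\star_i=q-q/p$ for $1\le i\le s$, $e^\star_{s+1}=q-1$, $e^\star_j=0$ for $j\ge s+2$, let $d^\star=|e^\star|_1$, and let $\mathcal{E}=\{e\in\{0,\dots,q-1\}^k: |e|_1\le d^\star-1\}$. Let $Q(k)=2q^{s+1}\log(q)\binom{k+d^\star}{d^\star}$ and choose $S\subseteq\mathbb{F}_q^k$ uniformly at random among subsets of size $Q(k)$. Consider the linear system over $\mathbb{F}_q$ in variables $\{z_\alpha\}_{\alpha\in S}$ consisting of the equations $\sum_{\alpha\in S}z_\alpha\alpha^{e'}=0$ for each $e'\in\mathcal{E}$, together with $\sum_{\alpha\in S}z_\alpha\alpha^{e^\star}=1$. Then the probability that this system has no solution is at most $q^{-\binom{k+d^\star}{d^\star}}$.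
   Context: For $\alpha\in\mathbb{F}_q^k$ and $e\in\{0,\dots,q-1\}^k$, $\alpha^e=\prod_i\alpha_i^{e_i}$ (with $0^0=1$); $|e|_1=\sum_ie_i$. Here $\log$ is the natural logarithm, and it is implicitly assumed that $Q(k)$ is an integer with $Q(k)\le q^k$ so that $S$ can be chosen. *)

(* Defs.v *)
From HB Require Import structures.
From mathcomp Require Import all_boot all_order all_algebra all_field.
From Stdlib Require Rdefinitions Rpower.
From mathcomp Require Import Rstruct.
Notation R := Rdefinitions.R.
Local Open Scope ring_scope.

Set Implicit Arguments.
Unset Strict Implicit.
Unset Printing Implicit Defensive.

Import GRing.Theory Num.Theory.

Section Defs.
Variables (F : finFieldType) (k : nat).

Definition pt := {ffun 'I_k -> F}.

(* alpha^e = prod_i alpha_i^{e_i}  (with 0^0 = 1, as x ^+ 0 = 1) *)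
Definition mono (a : pt) (e : 'I_k -> nat) : F :=
  (\prod_(i < k) a i ^+ e i)%R.

Definition l1 (e : 'I_k -> nat) : nat := \sum_(i < k) e i.

Definition solvable (estar : 'I_k -> nat) (dstar : nat) (S : {set pt}) : bool :=
  [exists z : {ffun pt -> F},
     [forall e : {ffun 'I_k -> 'I_#|F|},
        (l1 (fun i => nat_of_ord (e i)) <= dstar - 1)%N ==>
        ((\sum_(a in S) z a * mono a (fun i => nat_of_ord (e i)))%R == 0%R)]
     && ((\sum_(a in S) z a * mono a estar)%R == 1%R)].

Definition prob_unsolvable (estar : 'I_k -> nat) (dstar Q : nat) : R :=
  (#|[set S : {set pt} | (#|S| == Q) && ~~ solvable estar dstar S]|%:R
   / #|[set S : {set pt} | #|S| == Q]|%:R).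

End Defs.

(* e* for q and s: e*_i = q - q/p (i < s), e*_s = q - 1, 0 otherwise
   (0-based indices) *)
Definition estar_of (k q p s : nat) (i : 'I_k) : nat :=
  if (i < s)%N then (q - q %/ p)%N else if (nat_of_ord i == s) then (q - 1)%N else 0%N.

(* Main.v *)
Require Import Defs.
From Stdlib Require Import Reals.
From HB Require Import structures.
From mathcomp Require Import all_boot all_order all_algebra all_field.
From Stdlib Require Rdefinitions Rpower.
From mathcomp Require Import Rstruct.
From mathcomp Require Import zify ring lra.
Set Implicit Arguments. Unset Strict Implicit. Unset Printing Implicit Defensive.
Import Order.TTheory GRing.Theory Num.Theory.

Section NatPart.
Local Open Scope nat_scope.

Lemma bin_ratio a N Q : a <= N -> 'C(a,Q) * N^Q <= a^Q * 'C(N,Q).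
Proof.
move=> aN; elim: Q => [|Q IH]; first by rewrite !bin0 !expn0.
rewrite -(@leq_pmul2l Q.+1) //.
have H1 : Q.+1 * ('C(a, Q.+1) * N ^ Q.+1) = ((a - Q) * N) * ('C(a,Q) * N^Q).
  by rewrite mulnA mul_bin_left expnS; ring.
have H2 : Q.+1 * (a ^ Q.+1 * 'C(N, Q.+1)) = ((N - Q) * a) * (a^Q * 'C(N,Q)).
  by rewrite mulnCA mul_bin_left expnS; ring.
rewrite H1 H2; apply: leq_mul => //.
have [QA|QA] := leqP a Q; first by rewrite (eqP (_ : a - Q == 0)) ?subn_eq0.
nia.
Qed.


Definition psum k n (e : {ffun 'I_k -> 'I_n}) (i : nat) : nat := \sum_(j < k | (j <= i)%N) e j.
Arguments psum {k n}.

Lemma psum_le k n (e : {ffun 'I_k -> 'I_n}) i : psum e i <= \sum_j e j.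
Proof. by rewrite /psum [X in _ <= X](bigID (fun j : 'I_k => (j <= i)%N)) /= leq_addr. Qed.

Lemma psum_split k n (e : {ffun 'I_k -> 'I_n}) (i : 'I_k) :
  psum e i = \sum_(j < k | (j < i)%N) e j + e i.
Proof.
rewrite /psum (bigD1 i) //= addnC; congr (_ + _).
by apply: eq_bigl => j; rewrite andbC -ltn_neqAle.
Qed.

Lemma psum_inj k n (e f : {ffun 'I_k -> 'I_n}) :
  (forall i : 'I_k, psum e i = psum f i) -> e = f.
Proof.
move=> H.
suff: forall m, forall i : 'I_k, (i < m)%N -> e i = f i.
  by move=> Hm; apply/ffunP => i; apply: (Hm k).
elim=> [//|m IH] i lti.
have Hs : \sum_(j < k | (j < i)%N) (e j : nat) = \sum_(j < k | (j < i)%N) (f j : nat).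
  apply: eq_bigr => j ji; rewrite (IH j) //; exact: leq_trans ji _.
have := H i; rewrite !psum_split Hs => /eqP; rewrite eqn_add2l => /eqP.
by move/val_inj.
Qed.

Lemma card_bounded k n D :
  #|[set e : {ffun 'I_k -> 'I_n} | (\sum_i (e i : nat) <= D)%N]| <= 'C(k + D, D).
Proof.
pose f (e : {ffun 'I_k -> 'I_n}) : k.-tuple 'I_D.+1 := [tuple inord (psum e i) | i < k].
set A := [set e | _].
have inj : {in A &, injective f}.
  move=> e1 e2; rewrite !inE => h1 h2 h; apply: psum_inj => i.
  have := congr1 (fun t => val (tnth t i)) h; rewrite /f !tnth_mktuple /=.
  by rewrite !inordK ?ltnS //; [exact: (leq_trans (psum_le e2 i) h2)|exact: (leq_trans (psum_le e1 i) h1)].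
rewrite -(card_in_imset inj).
have sub : f @: A \subset [set t : k.-tuple 'I_D.+1 | sorted leq [seq val i | i <- t]].
  apply/subsetP => t /imsetP [e eA ->]; rewrite inE.
  have -> : [seq val i | i <- f e] = [seq psum e i | i <- iota 0 k].
    rewrite -val_enum_ord -!map_comp /f /=. apply: eq_map => i /=.
    rewrite inE in eA; rewrite inordK // ltnS; exact: leq_trans (psum_le e i) eA.
  apply: homo_sorted (iota_sorted 0 k) => x y xy.
  rewrite /psum [X in X <= _]big_mkcond [X in _ <= X]big_mkcond /=.
  apply: leq_sum => j _; case: ifP => // jx; by rewrite (leq_trans jx xy).
apply: leq_trans (subset_leq_card sub) _.
by rewrite card_sorted_tuples -(bin_sub (leq_addr D k)) addKn.
Qed.

End NatPart.

Local Open Scope ring_scope.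

Lemma card_gt1 (F : finFieldType) : (1 < #|F|)%N.
Proof.
rewrite (cardD1 (0 : F)) inE ltnS lt0n; apply/existsP; exists 1.
by rewrite !inE oner_eq0.
Qed.

Definition indc (F : finFieldType) (y : F) (j : nat) : F :=
  ((j : nat) == 0%N)%:R - ((-y) ^+ (#|F|.-1 - j) *+ 'C(#|F|.-1, j)).

Lemma ind_poly (F : finFieldType) (y : F) x :
  \sum_(j < #|F|) indc y j * x ^+ j = (x == y)%:R.
Proof.
rewrite /indc.
set n := #|F|.-1.
have hq : #|F| = n.+1 by rewrite prednK // ltnW // card_gt1.
have -> : (x == y)%:R = 1 - (- y + x) ^+ n :> F.
  case: eqP => [->|/eqP xy]; first by rewrite addNr expr0n /n; have := card_gt1 F; case: #|F| => [|[|m]] //= _; rewrite subr0.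
  have z0 : - y + x != 0 by rewrite addrC subr_eq0.
  have : (- y + x) ^+ n * (- y + x) = 1 * (-y + x) by rewrite -exprSr -hq expf_card mul1r.
  by move/(mulIf z0) ->; rewrite subrr.
rewrite exprDn.
rewrite -[LHS](big_mkord xpredT (fun j => (((j : nat) == 0%N)%:R - ((-y) ^+ (n - j) *+ 'C(n, j))) * x ^+ j)).
rewrite -(big_mkord xpredT (fun i => (- y) ^+ (n - i) * x ^+ i *+ 'C(n, i))) hq.
under eq_bigr do rewrite mulrBl.
have h0 : \sum_(0 <= j < n.+1) (((j : nat) == 0%N)%:R * x ^+ j) = 1 :> F.
  by rewrite big_nat_recl // big1 => [|i _]; rewrite ?mul0r ?expr0 ?mulr1 ?addr0.
rewrite sumrB h0; congr (_ - _); apply: eq_bigr => i _.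
by rewrite mulrnAl.
Qed.
Section Poly.
Variables (F : finFieldType) (k : nat).
Definition expo := {ffun 'I_k -> 'I_#|F|}.
Definition monoE (x : pt F k) (e : expo) := mono x (fun i => nat_of_ord (e i)).
Definition evalp (a : {ffun expo -> F}) : {ffun pt F k -> F} :=
  [ffun x => \sum_e a e * monoE x e].

Lemma evalp_surj g : exists a, evalp a = g.
Proof.
pose bb (y : F) (j : 'I_#|F|) := indc y j.
have bbP y x : \sum_j bb y j * x ^+ j = (x == y)%:R := ind_poly y x.
pose ag (c : pt F k) (e : expo) := \prod_i bb (c i) (e i).
have agP c x : \sum_e ag c e * monoE x e = (x == c)%:R.
  rewrite /ag /monoE /mono.
  under eq_bigr do rewrite -big_split /=.
  rewrite -(bigA_distr_bigA (fun i j => bb (c i) j * x i ^+ j)) /=.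
  under eq_bigr do rewrite bbP.
  case: eqP => [->|xc]; first by apply: big1 => i _; rewrite eqxx.
  have [i xi] : exists i, x i != c i.
    apply/existsP; rewrite -negb_forall; apply/negP => /forallP h.
    by apply: xc; apply/ffunP => i; apply/eqP/h.
  by rewrite (bigD1 i) //= (negbTE xi) mul0r.
exists [ffun e => \sum_c g c * ag c e]; apply/ffunP => x; rewrite !ffunE.
under eq_bigr do rewrite ffunE mulr_suml.
rewrite exchange_big /=.
under eq_bigr do (under eq_bigr do rewrite -mulrA; rewrite -mulr_sumr agP).
rewrite (bigD1 x) //= eqxx mulr1 big1 ?addr0 // => c cx.
by rewrite eq_sym (negbTE cx) mulr0.
Qed.

Lemma evalp_inj : injective evalp.
Proof.
have H : {in predT &, injective evalp}.
  apply/image_injP; rewrite eqn_leq leq_image_card /=.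
  have -> : #|predT : {pred {ffun expo -> F}}| = #|{ffun pt F k -> F}|.
    by rewrite cardT -cardE !card_ffun !card_ord.
  rewrite cardT -cardE; apply/subset_leq_card/subsetP => g _.
  by have [a <-] := evalp_surj g; apply: image_f.
by move=> x y; apply: H.
Qed.

Lemma poly_zero (a : {ffun expo -> F}) :
  (forall x, \sum_e a e * monoE x e = 0) -> forall e, a e = 0.
Proof.
move=> h e; have : evalp a = evalp 0.
  by apply/ffunP => x; rewrite !ffunE h big1 // => e' _; rewrite ffunE mul0r.
by move/evalp_inj => ->; rewrite ffunE.
Qed.

End Poly.
Section Fiber.
Variables (F : finFieldType) (k s : nat).
Hypothesis sk : (s < k)%N.
Local Notation m := (k - s.+1)%N.
Local Notation expo := (expo F k).

Definition z0 : 'I_#|F| := Ordinal (ltnW (card_gt1 F)).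
Definition restrH (e : expo) : expo := [ffun i : 'I_k => if (i <= s)%N then e i else z0].
Definition tailv (b : {ffun 'I_m -> F}) (i : 'I_k) : F := odflt 0 (omap b (insub (i - s.+1)%N)).
Definition fill (x : pt F k) (b : {ffun 'I_m -> F}) : pt F k :=
  [ffun i : 'I_k => if (i <= s)%N then x i else tailv b i].
Definition shift (j : 'I_m) : 'I_k.
Proof. refine (@Ordinal k (j + s.+1) _). by have := ltn_ord j; lia. Defined.

Lemma fill_shift x b j : fill x b (shift j) = b j.
Proof.
rewrite ffunE; have -> : (shift j <= s)%N = false by rewrite /=; lia.
by rewrite /tailv /= addnK valK.
Qed.

Lemma mono_fill x b e :
  monoE (fill x b) e = monoE x (restrH e) * \prod_(i : 'I_k | ~~ (i <= s)%N) tailv b i ^+ e i.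
Proof.
rewrite /monoE /mono (bigID (fun i : 'I_k => (i <= s)%N)) /=.
rewrite [X in _ = X * _](bigID (fun i : 'I_k => (i <= s)%N)) /=.
rewrite [X in _ = _ * X * _]big1 ?mulr1 => [|i /negbTE hi]; last by rewrite ffunE hi expr0.
congr (_ * _).
  apply: eq_bigr => i hi; rewrite !ffunE hi; reflexivity.
by apply: eq_bigr => i /negbTE hi; rewrite !ffunE hi.
Qed.

Lemma fiber_nonzero (a : {ffun expo -> F}) (e0 : expo) :
  restrH e0 = e0 -> a e0 != 0 ->
  (forall e, a e != 0 -> restrH e = e0 -> e = e0) ->
  forall b, exists x, \sum_e a e * monoE (fill x b) e != 0.
Proof.
move=> he0 ae0 huniq b.
pose w (e : expo) := \prod_(i : 'I_k | ~~ (i <= s)%N) tailv b i ^+ e i.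
pose a' := [ffun e' => \sum_(e | restrH e == e') a e * w e].
have key x : \sum_e a e * monoE (fill x b) e = \sum_e' a' e' * monoE x e'.
  under eq_bigr do rewrite mono_fill.
  rewrite (partition_big restrH xpredT) //=; apply: eq_bigr => e' _.
  rewrite ffunE mulr_suml; apply: eq_bigr => e /eqP <-.
  by rewrite /w [monoE _ _ * _]mulrC mulrA.
apply/existsP; rewrite -negb_forall; apply/negP => /forallP hall.
have h0 : a' e0 = 0.
  apply: poly_zero => x; rewrite -key; apply/eqP.
  exact: hall.
move: h0; rewrite ffunE (bigD1 e0) ?he0 //= big1 ?addr0 => [|e /andP[/eqP he ne]].
  have -> : w e0 = 1.
    rewrite /w big1 // => i /negbTE hi.
    by rewrite -he0 ffunE hi /= expr0.
  by rewrite mulr1 => /eqP; rewrite (negbTE ae0).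
have [/eqP ->|ane] := boolP (a e == 0); first by rewrite mul0r.
by move: ne; rewrite (huniq e ane he) eqxx.
Qed.

Lemma zero_count (a : {ffun expo -> F}) (e0 : expo) :
  restrH e0 = e0 -> a e0 != 0 ->
  (forall e, a e != 0 -> restrH e = e0 -> e = e0) ->
  (#|F| ^ m + #|[set x : pt F k | (\sum_e a e * monoE x e == 0)%R]| <= #|F| ^ k)%N.
Proof.
move=> he0 ae0 hu.
set Z := [set x | _].
pose g (b : {ffun 'I_m -> F}) :=
  fill (odflt [ffun=> 0] [pick x | \sum_e a e * monoE (fill x b) e != 0]) b.
have gZ b : g b \in ~: Z.
  rewrite /g; case: pickP => [x /= hx|/= hn]; first by rewrite !inE.
  have [x hx] := fiber_nonzero he0 ae0 hu b.
  by move: (hn x); rewrite hx.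
have ginj : injective g.
  move=> b1 b2 h; apply/ffunP => j.
  by rewrite -(fill_shift (odflt [ffun=> 0] [pick x | \sum_e a e * monoE (fill x b1) e != 0]) b1 j) -/(g b1) h /g fill_shift.
have : (#|{ffun 'I_m -> F}| <= #|~: Z|)%N.
  rewrite -(card_imset predT ginj); apply/subset_leq_card/subsetP => y /imsetP [b _ ->].
  exact: gZ.
rewrite card_ffun card_ord => h.
have := cardsC Z; rewrite card_ffun card_ord => <-.
by rewrite addnC leq_add2l.
Qed.
End Fiber.
Section Dual.
Variables (F : finFieldType) (k : nat).
Local Notation expo := (expo F k).

Lemma sum_enum (T : finType) (G : T -> F) :
  \sum_(i < #|T|) G (enum_val i) = \sum_x G x.
Proof.
rewrite (reindex enum_rank) /=; last by exists enum_val => x _; rewrite ?enum_rankK ?enum_valK.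
by apply: eq_bigr => x _; rewrite enum_rankK.
Qed.

Lemma sum_rank (T : finType) (G : 'I_#|T| -> F) :
  \sum_(i < #|T|) G i = \sum_x G (enum_rank x).
Proof.
rewrite (reindex enum_rank) //; by exists enum_val => x _; rewrite ?enum_rankK ?enum_valK.
Qed.

Lemma dual (E : pred expo) (est : 'I_k -> nat) (S : {set pt F k}) :
  ~~ [exists z : {ffun pt F k -> F},
       [forall e : expo, E e ==> ((\sum_(a in S) z a * monoE a e) == 0)]
       && ((\sum_(a in S) z a * mono a est) == 1)] ->
  exists c : {ffun expo -> F}, (forall e, ~~ E e -> c e = 0) /\
     forall x, x \in S -> mono x est = \sum_e c e * monoE x e.
Proof.
move=> hns.
pose n := #|expo|.
pose rowv (x : pt F k) : 'rV[F]_(1 + n) :=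
  row_mx (mono x est)%:M (\row_j (if E (enum_val j) then monoE x (enum_val j) else 0)).
pose A : 'M[F]_(#|pt F k|, 1 + n) :=
  \matrix_(i < #|pt F k|) (if enum_val i \in S then rowv (enum_val i) else 0).
pose t0 : 'rV[F]_(1 + n) := row_mx 1%:M 0.
have Aent i j : A i j = if enum_val i \in S then rowv (enum_val i) 0 j else 0.
  by rewrite /A mxE; case: ifP => //; rewrite mxE.
have [/submxP [D hD]|ntA] := boolP (t0 <= A)%MS.
  exfalso; move/negP: hns; apply; apply/existsP.
  exists [ffun x => D 0 (enum_rank x)].
  have col j : t0 0 j = \sum_(x in S) [ffun x => D 0 (enum_rank x)] x * rowv x 0 j.
    rewrite hD mxE sum_rank.
    rewrite [RHS]big_mkcond /=; apply: eq_bigr => i _.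
    by rewrite Aent enum_rankK ffunE; case: ifP => _; rewrite ?mulr0.
  apply/andP; split.
    apply/forallP => e; apply/implyP => Ee.
    have := col (rshift 1 (enum_rank e)); rewrite row_mxEr mxE => h.
    apply/eqP; apply: (etrans _ (esym h)); apply: eq_bigr => x _.
    by rewrite row_mxEr mxE enum_rankK Ee.
  have := col (lshift n ord0); rewrite row_mxEl mxE => h.
  apply/eqP; apply: (etrans _ (esym h)); apply: eq_bigr => x _.
  by rewrite row_mxEl mxE.
rewrite submxE in ntA.
set K := cokermx A in ntA.
have [j0 hj0] := rV0Pn _ ntA.
set mu := (t0 *m K) 0 j0 in hj0.
have muE : mu = K (lshift n ord0) j0.
  rewrite /mu mxE big_split_ord /= big_ord1 big1 ?addr0 => [|c _].
    by rewrite row_mxEl mxE mul1r.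
  by rewrite row_mxEr mxE mul0r.
exists [ffun e => if E e then - K (rshift 1 (enum_rank e)) j0 / mu else 0].
split=> [e /negbTE Ee|x xS]; first by rewrite ffunE Ee.
have h0 : (A *m K) (enum_rank x) j0 = 0 by rewrite mulmx_coker mxE.
have Ae e : A (enum_rank x) (rshift 1 (enum_rank e)) = if E e then monoE x e else 0.
  by rewrite Aent enum_rankK xS row_mxEr mxE enum_rankK.
have A0 : A (enum_rank x) (lshift n ord0) = mono x est.
  by rewrite Aent enum_rankK xS row_mxEl mxE eqxx mulr1n.
move: h0; rewrite mxE big_split_ord big_ord1 sum_rank A0.
under eq_bigr do rewrite Ae.
rewrite -muE => h.
have -> : mono x est = - (\sum_e (if E e then monoE x e else 0) * K (rshift 1 (enum_rank e)) j0) / mu.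
  apply: (mulIf hj0) => /=; rewrite divfK //; apply/eqP; rewrite -addr_eq0; exact/eqP.
rewrite -sumrN mulr_suml; apply: eq_bigr => e _; rewrite ffunE.
case: (E e); last by rewrite !mul0r oppr0 mul0r.
by rewrite mulNr mulNr mulNr; congr (- _); rewrite [monoE x e * _]mulrC mulrAC.
Qed.
End Dual.

Lemma exp_le (a b : R) : a <= b -> exp a <= exp b.
Proof.
rewrite le_eqVlt => /orP [/eqP -> //| /RltP h].
by apply/ltW/RltP/exp_increasing.
Qed.

Lemma real_bound (q t B Q : nat) : (1 < q)%N ->
  2 * q%:R ^+ t * Rpower.ln q%:R * B%:R <= Q%:R ->
  q%:R ^+ B * (1 - (q%:R ^+ t)^-1) ^+ Q <= (q%:R ^+ B)^-1 :> R.
Proof.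
move=> q1 hQ.
set x : R := q%:R.
have x1 : 1 < x by rewrite /x ltr1n.
have x0 : 0 < x by apply: lt_trans x1.
have xt1 : 1 <= x ^+ t by apply: exprn_ege1; apply: ltW.
have xt0 : 0 < x ^+ t by apply: lt_le_trans xt1.
set y := (x ^+ t)^-1.
have y0 : 0 < y by rewrite invr_gt0.
have y1 : y <= 1 by rewrite invf_le1.
have h1 : 1 - y <= exp (- y).
  by have /RleP := exp_ineq1_le (- y).
have h2 : (1 - y) ^+ Q <= exp (- y *+ Q).
  rewrite -expRX; apply: lerXn2r => //; rewrite nnegrE ?subr_ge0 //.
  apply: ltW; apply/RltP; apply: exp_pos.
have lnx : exp (ln x) = x by apply: exp_ln; apply/RltP.
have h3 : - y *+ Q <= - (ln x *+ B *+ 2).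
  have h3' : 2 * ln x * B%:R <= y * Q%:R.
    have e : x ^+ t * (y * Q%:R) = Q%:R by rewrite mulrA /y mulfV ?gt_eqF // mul1r.
    rewrite -(ler_pM2l xt0) e.
    apply: le_trans hQ; rewrite le_eqVlt; apply/orP; left; apply/eqP; rewrite /x; ring.
  have -> : - y *+ Q = - (y * Q%:R) by rewrite mulr_natr mulNrn.
  have -> : ln x *+ B *+ 2 = 2 * ln x * B%:R by rewrite -(mulr_natr (ln x *+ B)) -(mulr_natr (ln x)); ring.
  by rewrite lerN2.
have h5 : exp (- (ln x *+ B *+ 2)) = (x ^+ B)^-1 * (x ^+ B)^-1.
  rewrite exp_Ropp -!expRX lnx RinvE; by rewrite expr2 invfM.
have xB : 0 < x ^+ B by apply: exprn_gt0.
apply: le_trans (_ : x ^+ B * ((x ^+ B)^-1 * (x ^+ B)^-1) <= _).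
  apply: ler_wpM2l; first exact: ltW.
  apply: le_trans h2 _; rewrite -h5; exact: exp_le.
by rewrite mulrA mulfV ?gt_eqF // mul1r.
Qed.

Lemma card_bigcup_le (T I : finType) (A : pred I) (B : I -> {set T}) :
  (#|\bigcup_(i in A) B i| <= \sum_(i in A) #|B i|)%N.
Proof.
elim/big_rec2: _ => [|i U n _ h]; first by rewrite cards0.
apply: leq_trans (leq_card_setU _ _) _; exact: leq_add.
Qed.

Theorem lemma4p3 (p l : nat) (F : finFieldType) (d s r k Q : nat) :
  prime p -> #|F| = (p ^ l)%N -> (0 < d)%N ->
  d.+1 = (s * (#|F| - #|F| %/ p) + r)%N ->
  (r < #|F| - #|F| %/ p)%N ->
  (s.+1 <= k)%N ->
  let q := #|F| in
  let estar := @estar_of k q p s in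
  let dstar := l1 estar in
  let B := 'C(k + dstar, dstar) in
  let Qk : R := 2 * (q%:R) ^+ s.+1 * Rpower.ln q%:R * B%:R in
  (* Q = Q(k) = 2 q^(s+1) log(q) binom(k+dstar, dstar), rounded up to an integer *)
  Qk <= Q%:R < Qk + 1 ->
  (Q <= q ^ k)%N ->
  @prob_unsolvable F k estar dstar Q <= (q%:R ^+ B)^-1.
Proof.
move=> pp hq d0 hd hr hsk q estar dstar B Qk /andP[hQk _] hQN.
have q1 : (1 < q)%N := card_gt1 F.
have l0 : (0 < l)%N by move: q1; rewrite /q hq; case: (l) => //; rewrite expn0.
have pq : (p <= q)%N.
  rewrite /q hq; apply: leq_trans (_ : p ^ 1 <= p ^ l)%N; first by rewrite expn1.
  exact: leq_pexp2l (prime_gt0 pp) l0.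
have qp0 : (0 < q %/ p)%N by rewrite divn_gt0 ?prime_gt0.
have est_lt i : (estar i < q)%N.
  rewrite /estar /estar_of; case: ifP => _; first by lia.
  case: ifP => _; lia.
pose es : expo F k := [ffun i => Ordinal (est_lt i)].
have mono_es x : monoE x es = mono x estar.
  by rewrite /monoE /mono; apply: eq_bigr => i _; rewrite ffunE.
have l1es : l1 (fun i => nat_of_ord (es i)) = dstar.
  by rewrite /l1 /dstar /l1; apply: eq_bigr => i _; rewrite ffunE.
have ds1 : (1 <= dstar)%N.
  rewrite /dstar /l1 (bigD1 (Ordinal hsk)) //= {1}/estar /estar_of /= ltnn eqxx.
  lia.
have restr_es : restrH s es = es.
  apply/ffunP => i; rewrite ffunE; case: ifP => // hi; apply: val_inj.
  rewrite /= ffunE /= /estar /estar_of.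
  have -> : (i < s)%N = false by lia.
  by have -> : (nat_of_ord i == s) = false by lia.
pose E : pred (expo F k) := fun e => (l1 (fun i => nat_of_ord (e i)) <= dstar - 1)%N.
have Ees : ~~ E es by rewrite /E l1es; lia.
have l1restr (e : expo F k) : (l1 (fun i => nat_of_ord (restrH s e i)) <= l1 (fun i => nat_of_ord (e i)))%N.
  apply: leq_sum => i _; rewrite ffunE; case: ifP => //.
pose aof (c : {ffun expo F k -> F}) : {ffun expo F k -> F} := [ffun e => (e == es)%:R - c e].
pose Z (a : {ffun expo F k -> F}) := [set x : pt F k | \sum_e a e * monoE x e == 0].
pose Cset := [set c : {ffun expo F k -> F} | [forall e, (c e != 0) ==> E e]].
pose Bc c := [set S : {set pt F k} | (S \subset Z (aof c)) && (#|S| == Q)].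
pose bad := [set S : {set pt F k} | (#|S| == Q) && ~~ solvable estar dstar S].
pose N := (q ^ k)%N.
pose M := (q ^ (k - s.+1))%N.
have step1 : bad \subset \bigcup_(c in Cset) Bc c.
  apply/subsetP => S; rewrite inE => /andP [SQ ns].
  have [c [c0 cS]] := dual ns.
  apply/bigcupP; exists c.
    rewrite inE; apply/forallP => e; apply/implyP => ce.
    by apply: contraR ce => /c0 ->.
  rewrite inE SQ andbT; apply/subsetP => x xS; rewrite inE.
  under eq_bigr do rewrite ffunE mulrBl.
  rewrite sumrB (bigD1 es) //= eqxx mul1r big1 ?addr0 => [|e /negbTE ->]; last by rewrite mul0r.
  by rewrite mono_es (cS x xS) subrr.
have step3 c : c \in Cset -> (#|Bc c| <= 'C(N - M, Q))%N.
  rewrite inE => /forallP hc.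
  have cE e : c e != 0 -> E e by move=> h; exact: (implyP (hc e)).
  have ces : c es = 0 by apply/eqP; apply: contraNT Ees => /cE.
  have HZ : (M + #|Z (aof c)| <= N)%N.
    apply: (@zero_count F k s hsk (aof c) es restr_es).
      by rewrite ffunE eqxx ces subr0 oner_eq0.
    move=> e; rewrite ffunE => ae he; apply/eqP; apply/negPn/negP => ne.
    move: ae; rewrite (negbTE ne) sub0r oppr_eq0 => /cE; rewrite /E.
    have := l1restr e; rewrite he l1es; lia.
  rewrite /Bc.
  rewrite cards_draws; apply: leq_bin2l; rewrite -(leq_add2l M) subnKC; [exact: HZ | exact: leq_trans (leq_addr _ _) HZ].
have step5 : (#|Cset| <= q ^ B)%N.
  have sub : Cset \subset pffun_on (0 : F) E predT.
    apply/subsetP => c; rewrite inE => /forallP h; apply/pffun_onP; split => //.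
    apply/subsetP => e; rewrite inE => ce; exact: (implyP (h e) ce).
  apply: leq_trans (subset_leq_card sub) _; rewrite card_pffun_on.
  apply: leq_pexp2l; first by apply: ltnW.
  apply: leq_trans (card_bounded k #|F| dstar).
  apply: subset_leq_card; apply/subsetP => e; rewrite /E /l1 => h; rewrite inE.
  have h' : (\sum_(i < k) (e i : nat) <= dstar - 1)%N := h.
  by apply: leq_trans h' _; apply: leq_subr.
have natb : (#|bad| <= q ^ B * 'C(N - M, Q))%N.
  apply: leq_trans (subset_leq_card step1) _.
  apply: leq_trans (card_bigcup_le _ _) _.
  apply: leq_trans (_ : \sum_(c in Cset) 'C(N - M, Q) <= _)%N.
    by apply: leq_sum => c /step3.
  by rewrite sum_nat_const leq_mul2r step5 orbT.
have natc : (#|bad| * N ^ Q <= q ^ B * (N - M) ^ Q * 'C(N, Q))%N.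
  apply: leq_trans (leq_mul natb (leqnn _)) _.
  rewrite -mulnA -mulnA leq_mul2l; apply/orP; right; apply: bin_ratio; apply: leq_subr.
have NM : N = (M * q ^ s.+1)%N by rewrite /N /M -expnD subnK.
have MN : (M <= N)%N by rewrite NM leq_pmulr // expn_gt0 ltnW.
have Cpos : (0 < 'C(N, Q))%N by rewrite bin_gt0.
have den : #|[set S : {set pt F k} | #|S| == Q]| = 'C(N, Q) by rewrite card_draws card_ffun card_ord.
rewrite /prob_unsolvable den.
change ((#|bad|)%:R / ('C(N,Q))%:R <= (q%:R ^+ B)^-1 :> R).
rewrite ler_pdivrMr ?ltr0n //.
set y : R := (q%:R ^+ s.+1)^-1.
have qs0 : (q%:R ^+ s.+1 : R) != 0 by rewrite expf_neq0 // pnatr_eq0 -lt0n ltnW.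
have key : (N - M)%:R = N%:R * (1 - y) :> R.
  by rewrite natrB // mulrBr mulr1 NM natrM natrX -mulrA /y mulfV // mulr1.
have rb := real_bound q1 hQk.
have Nq0 : (0 : R) < N%:R ^+ Q by rewrite exprn_gt0 // ltr0n /N expn_gt0 ltnW.
have : (#|bad|%:R * N%:R ^+ Q <= q%:R ^+ B * (1 - y) ^+ Q * ('C(N, Q))%:R * N%:R ^+ Q :> R).
  have := natc; rewrite -(ler_nat R) !natrM !natrX key exprMn.
  move=> h; apply: le_trans h _; rewrite le_eqVlt; apply/orP; left; apply/eqP; rewrite /N ?natrX; ring.
rewrite ler_pM2r // => h; apply: le_trans h _.
by rewrite ler_wpM2r // ler0n.
Qed.
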